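(* Let $q\geq 2$ and $k$ be relatively prime natural numbers, and let \[ k=k_1+k_2q^{a_2}+\cdots+k_Nq^{a_N} \] be the base-$q$ expansion of $k$, where $0<a_2<\cdots<a_N$ and $1\le k_i<q$ (only nonzero digits listed). Then there exist $k', u\in\mathbb{N}$ such that $u>1$, $k\mid k'$, and the base-$q$ expansion of $k'$ is \[ k'=k_1+k_2q^{a_2'}+\cdots+k_Nq^{a_N'} \] (with $0<a_2'<\cdots<a_N'$), where $a_i'\equiv 1\pmod{u}$ for all $i\in\{2,\ldots,N\}$. *)

(* Defs.v *)
From mathcomp Require Import all_boot.
Set Implicit Arguments. Unset Strict Implicit. Unset Printing Implicit Defensive.

Definition qsum (q : nat) (ds : seq (nat * nat)) : nat :=
  \sum_(p <- ds) p.1 * q ^ p.2.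

(* ds lists the nonzero digits k_2..k_N with exponents a_2 < ... < a_N, all
   exponents positive and all digits in [1, q). *)
Definition qdigits_ok (q : nat) (ds : seq (nat * nat)) : Prop :=
  all (fun p => (0 < p.1 < q) && (0 < p.2)) ds /\ sorted ltn (map snd ds).

(* Main.v *)
Require Import Defs.
From mathcomp Require Import all_boot.
From mathcomp Require Import all_fingroup all_solvable.

Definition fe (T a : nat) := a + T * (a - 1).

Lemma qsum_cong (q k T : nat) (ds : seq (nat * nat)) :
  q ^ T = 1 %[mod k] ->
  qsum q (zip (map fst ds) (map (fe T) (map snd ds))) = qsum q ds %[mod k].
Proof.
move=> HT; rewrite /qsum; elim: ds => [|[d a] ds IH] /=; first by rewrite !big_nil.
rewrite !big_cons /=.
have Hx : d * q ^ fe T a = d * q ^ a %[mod k].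
  rewrite /fe expnD expnM mulnA -modnMmr -modnXm HT modnXm exp1n modnMmr.
  by rewrite muln1.
by rewrite -modnDm IH Hx modnDm.
Qed.

Lemma ok_zip (q T : nat) (ds : seq (nat * nat)) :
  qdigits_ok q ds -> qdigits_ok q (zip (map fst ds) (map (fe T) (map snd ds))).
Proof.
case=> Ha Hs; have Hz : zip (map fst ds) (map (fe T) (map snd ds))
   = map (fun p => (p.1, fe T p.2)) ds by elim: ds {Ha Hs} => [|[d a] ds IH] //=; rewrite IH.
rewrite Hz; split.
  rewrite all_map; apply: sub_all Ha => -[d a] /= /andP[-> a0] /=.
  by rewrite /fe addn_gt0 a0.
rewrite -map_comp.
have -> : map (snd \o (fun p : nat * nat => (p.1, fe T p.2))) ds = map (fe T) (map snd ds).
  by rewrite -map_comp.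
apply: (homo_sorted _ _ Hs) => x y xy; rewrite /fe.
apply: leq_trans (leq_add xy (leq_mul (leqnn T) (leq_sub2r 1 (ltnW xy)))).
by rewrite addSn.
Qed.

Theorem lemma1 (q k k1 : nat) (ds : seq (nat * nat)) :
  2 <= q -> coprime q k ->
  0 < k1 < q -> qdigits_ok q ds ->
  k = k1 + qsum q ds ->
  exists (k' u : nat) (es : seq nat),
    [/\ 1 < u, k %| k', size es = size ds,
        qdigits_ok q (zip (map fst ds) es)
      & k' = k1 + qsum q (zip (map fst ds) es)
        /\ all (fun e => e == 1 %[mod u]) es].
Proof.
move=> q2 cqk /andP[k10 _] ok Hk.
set T := totient k.
have k0 : 0 < k by rewrite Hk addn_gt0 k10.
have T0 : 0 < T by rewrite totient_gt0.
exists (k1 + qsum q (zip (map fst ds) (map (fe T) (map snd ds)))), T.+1,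
  (map (fe T) (map snd ds)).
split => //.
- rewrite /dvdn -modnDmr qsum_cong; last exact: Euler_exp_totient.
  by rewrite modnDmr -Hk modnn.
- by rewrite !size_map.
- exact: ok_zip.
split => //.
case: ok => Ha _; rewrite all_map all_map; apply: sub_all Ha => -[d a] /= /andP[_ a0].
rewrite /fe; apply/eqP.
have -> : a + T * (a - 1) = (a - 1) * T.+1 + 1.
  by rewrite mulnS [(a-1)*T]mulnC addnAC subnK.
by rewrite modnMDl.
Qed.
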